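(* Let $X$ be a uniformly convex and uniformly smooth Banach space, $D_0$ a dislocation group on $X$ and $D\subset D_0$. Let $(u_k)\subset X$ be bounded and suppose there are sequences $(g_k^{(1)}),(g_k^{(2)})\subset D$ and elements $w^{(1)},w^{(2)}\in X$ with $(g_k^{(1)})^{-1}u_k\rightharpoondown w^{(1)}$ and $(g_k^{(2)})^{-1}(u_k-g_k^{(1)}w^{(1)})\rightharpoondown w^{(2)}\ne0$. Then $(g_k^{(1)})^{-1}g_k^{(2)}\rightharpoonup0$.
   Context: Δ-convergence: $x_k\rightharpoondown x$ if for every $y\in X$, $\limsup_k(\|x_k-x\|-\|x_k-y\|)\le0$. Operator convergence $g_k\rightharpoonup g$: $g_kx\rightharpoonup gx$ weakly for all $x$; strong convergence: $g_kx\to gx$ in norm for all $x$. A group $D_0$ of bijective linear isometries of $X$ is a dislocation group if: $(\ast)$ whenever $(g_k)\subset D_0$ and $g_k\not\rightharpoonup0$, some subsequence has both $(g_{k_j})$ and $(g_{k_j}^{-1})$ strongly convergent; and $(\ast\ast)$ whenever $u_k\rightharpoondown0$, $w\in X$, $(g_k)\subset D_0$, $g_k\rightharpoonup0$, then $u_k+g_kw\rightharpoondown0$. *)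

(* Defs.v *)
From Stdlib Require Export Reals.
Open Scope R_scope.

Record NormedSpace := {
  car :> Type;
  zero : car;
  add : car -> car -> car;
  opp : car -> car;
  scal : R -> car -> car;
  norm : car -> R;
  add_assoc : forall x y z, add x (add y z) = add (add x y) z;
  add_comm : forall x y, add x y = add y x;
  add_zero : forall x, add x zero = x;
  add_opp : forall x, add x (opp x) = zero;
  scal_assoc : forall a b x, scal a (scal b x) = scal (a * b) x;
  scal_one : forall x, scal 1 x = x;
  scal_add_r : forall a x y, scal a (add x y) = add (scal a x) (scal a y);
  scal_add_l : forall a b x, scal (a + b) x = add (scal a x) (scal b x);
  norm_eq0 : forall x, norm x = 0 <-> x = zero;
  norm_triangle : forall x y, norm (add x y) <= norm x + norm y;
  norm_scal : forall a x, norm (scal a x) = Rabs a * norm x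
}.

Arguments zero {_}.
Arguments add {_}.
Arguments opp {_}.
Arguments scal {_}.
Arguments norm {_}.

Section Defs.
Variable X : NormedSpace.

Definition sub (x y : X) : X := add x (opp y).

Definition cv_strong (u : nat -> X) (x : X) : Prop :=
  forall eps, 0 < eps -> exists N, forall k, (N <= k)%nat -> norm (sub (u k) x) < eps.

Definition cauchy (u : nat -> X) : Prop :=
  forall eps, 0 < eps -> exists N, forall m n, (N <= m)%nat -> (N <= n)%nat ->
    norm (sub (u m) (u n)) < eps.

Definition banach : Prop := forall u : nat -> X, cauchy u -> exists x, cv_strong u x.

Definition linear_functional (f : X -> R) : Prop :=
  (forall x y, f (add x y) = f x + f y) /\ (forall a x, f (scal a x) = a * f x).

Definition bounded_functional (f : X -> R) : Prop :=
  exists C, forall x, Rabs (f x) <= C * norm x.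

Definition weak_cv (u : nat -> X) (x : X) : Prop :=
  forall f, linear_functional f -> bounded_functional f ->
    Un_cv (fun k => f (u k)) (f x).

(* Delta-convergence: for every y, limsup_k (||u_k - x|| - ||u_k - y||) <= 0,
   written out as: for every eps > 0 the terms are eventually <= eps. *)
Definition delta_cv (u : nat -> X) (x : X) : Prop :=
  forall y eps, 0 < eps -> exists N, forall k, (N <= k)%nat ->
    norm (sub (u k) x) - norm (sub (u k) y) <= eps.

Definition uniformly_convex : Prop :=
  forall eps, 0 < eps -> exists delta, 0 < delta /\
    forall x y : X, norm x <= 1 -> norm y <= 1 -> eps <= norm (sub x y) ->
      norm (scal (/ 2) (add x y)) <= 1 - delta.

(* rho(tau)/tau -> 0 as tau -> 0+, where rho is the modulus of smoothness
   rho(tau) = sup {(||x + tau y|| + ||x - tau y||)/2 - 1 : ||x|| = ||y|| = 1}. *)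
Definition uniformly_smooth : Prop :=
  forall eps, 0 < eps -> exists tau0, 0 < tau0 /\
    forall tau, 0 < tau -> tau < tau0 ->
      forall x y : X, norm x = 1 -> norm y = 1 ->
        (norm (add x (scal tau y)) + norm (sub x (scal tau y))) / 2 - 1 <= eps * tau.

Definition linear_op (g : X -> X) : Prop :=
  (forall x y, g (add x y) = add (g x) (g y)) /\ (forall a x, g (scal a x) = scal a (g x)).

Definition isometry (g : X -> X) : Prop := forall x, norm (g x) = norm x.

Definition inverse_of (h g : X -> X) : Prop := forall x, h (g x) = x /\ g (h x) = x.

Definition op_weak_cv (g : nat -> X -> X) (G : X -> X) : Prop :=
  forall x, weak_cv (fun k => g k x) (G x).

Definition op_strong_convergent (g : nat -> X -> X) : Prop :=
  exists G : X -> X, forall x, cv_strong (fun k => g k x) (G x).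

Definition isometry_group (D0 : (X -> X) -> Prop) : Prop :=
  (forall g, D0 g -> linear_op g /\ isometry g /\ exists h, inverse_of h g) /\
  D0 (fun x => x) /\
  (forall g1 g2, D0 g1 -> D0 g2 -> D0 (fun x => g1 (g2 x))) /\
  (forall g h, D0 g -> inverse_of h g -> D0 h).

Definition dislocation_group (D0 : (X -> X) -> Prop) : Prop :=
  isometry_group D0 /\
  (forall g h : nat -> X -> X, (forall k, D0 (g k)) -> (forall k, inverse_of (h k) (g k)) ->
     ~ op_weak_cv g (fun _ => zero) ->
     exists phi : nat -> nat, (forall j, (phi j < phi (S j))%nat) /\
       op_strong_convergent (fun j => g (phi j)) /\
       op_strong_convergent (fun j => h (phi j))) /\
  (forall (u : nat -> X) (w : X) (g : nat -> X -> X),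
     delta_cv u zero -> (forall k, D0 (g k)) -> op_weak_cv g (fun _ => zero) ->
     delta_cv (fun k => add (u k) (g k w)) zero).

End Defs.

Arguments sub {X}.
Arguments cv_strong {X}.
Arguments weak_cv {X}.
Arguments delta_cv {X}.
Arguments inverse_of {X}.
Arguments op_weak_cv {X}.
Arguments op_strong_convergent {X}.
Arguments dislocation_group {X}.

(* Main.v *)
Require Import Defs.
From Stdlib Require Import Reals Lra Lia Classical.
Open Scope R_scope.

Section Alg.
Variable X : NormedSpace.
Implicit Types x y z w a : X.

Lemma L_add0l x : add zero x = x.
Proof. rewrite add_comm; apply add_zero. Qed.

Lemma L_reg a x y : add a x = add a y -> x = y.
Proof.
  intro H.
  rewrite <- (L_add0l x), <- (L_add0l y).
  rewrite <- (add_opp X a), (add_comm X a (opp a)), <- !add_assoc, H; reflexivity.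
Qed.

Lemma L_scal0 x : scal 0 x = zero.
Proof.
  apply (L_reg (scal 0 x)). rewrite <- scal_add_l, Rplus_0_l, add_zero; reflexivity.
Qed.

Lemma L_opp_scal x : opp x = scal (-1) x.
Proof.
  apply (L_reg x). rewrite add_opp.
  replace (add x (scal (-1) x)) with (add (scal 1 x) (scal (-1) x)) by (rewrite scal_one; reflexivity).
  rewrite <- scal_add_l.
  replace (1 + -1) with 0 by ring. symmetry; apply L_scal0.
Qed.

Lemma L_scal_zero (r : R) : scal r (@zero X) = zero.
Proof. rewrite <- (L_scal0 (@zero X)), scal_assoc, Rmult_0_r; reflexivity. Qed.

Lemma L_opp_zero : opp (@zero X) = zero.
Proof. rewrite L_opp_scal; apply L_scal_zero. Qed.

Lemma L_opp_add x y : opp (add x y) = add (opp x) (opp y).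
Proof. rewrite !L_opp_scal; apply scal_add_r. Qed.

Lemma L_opp_opp x : opp (opp x) = x.
Proof. rewrite !L_opp_scal, scal_assoc. replace (-1 * -1) with 1 by ring. apply scal_one. Qed.

Lemma L_scal_opp (r : R) x : scal r (opp x) = opp (scal r x).
Proof. rewrite !L_opp_scal, !scal_assoc, Rmult_comm; reflexivity. Qed.

Lemma L_norm_opp x : norm (opp x) = norm x.
Proof. rewrite L_opp_scal, norm_scal. replace (Rabs (-1)) with 1 by (rewrite Rabs_left; lra). ring. Qed.

Lemma L_norm_nonneg x : 0 <= norm x.
Proof.
  assert (H := norm_triangle X x (opp x)). rewrite add_opp, L_norm_opp in H.
  assert (norm (@zero X) = 0) by (apply norm_eq0; reflexivity). lra.
Qed.

Lemma L_sub_zero x : sub x zero = x.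
Proof. unfold sub; rewrite L_opp_zero; apply add_zero. Qed.

Lemma L_id1 v w c : sub (sub v w) c = sub v (add w c).
Proof. unfold sub; rewrite L_opp_add, add_assoc; reflexivity. Qed.

Lemma L_id4 s w : sub s (sub s w) = w.
Proof. unfold sub; rewrite L_opp_add, L_opp_opp, add_assoc, add_opp; apply L_add0l. Qed.

Lemma L_id5 s w : scal (/2) (add s (sub s w)) = sub s (scal (/2) w).
Proof.
  unfold sub. rewrite add_assoc, scal_add_r, scal_add_r, <- scal_add_l, L_scal_opp.
  replace (/2 + /2) with 1 by field. rewrite scal_one; reflexivity.
Qed.

Lemma L_id7 z a c : add (sub z a) (sub a c) = sub z c.
Proof.
  unfold sub. rewrite <- add_assoc. f_equal.
  rewrite add_assoc, (add_comm X (opp a) a), add_opp; apply L_add0l.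
Qed.

Lemma L_scal_sub r x y : scal r (sub x y) = sub (scal r x) (scal r y).
Proof. unfold sub; rewrite scal_add_r, L_scal_opp; reflexivity. Qed.

Lemma L_norm_sub_le x y : norm (sub x y) <= norm x + norm y.
Proof. unfold sub. rewrite <- (L_norm_opp y). apply norm_triangle. Qed.

Lemma L_lin0 g : linear_op X g -> g zero = zero.
Proof. intros [_ Hs]. rewrite <- (L_scal0 zero), Hs, !L_scal0; reflexivity. Qed.

Lemma L_lin_sub g x y : linear_op X g -> g (sub x y) = sub (g x) (g y).
Proof.
  intros [Ha Hs]. unfold sub. rewrite Ha, !L_opp_scal, Hs; reflexivity.
Qed.

End Alg.

Lemma phi_ge (phi : nat -> nat) : (forall j, (phi j < phi (S j))%nat) -> forall j, (j <= phi j)%nat.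
Proof. intros H j; induction j; [lia| specialize (H j); lia]. Qed.

Theorem lemma5p8 (X : NormedSpace) (D0 D : (X -> X) -> Prop) (u : nat -> X)
  (g1 g2 h1 h2 : nat -> X -> X) (w1 w2 : X) :
  banach X -> uniformly_convex X -> uniformly_smooth X ->
  dislocation_group D0 ->
  (forall g, D g -> D0 g) ->
  (exists M, forall k, norm (u k) <= M) ->
  (forall k, D (g1 k)) -> (forall k, D (g2 k)) ->
  (forall k, inverse_of (h1 k) (g1 k)) ->   (* h1 k = (g1 k)^{-1} *)
  (forall k, inverse_of (h2 k) (g2 k)) ->   (* h2 k = (g2 k)^{-1} *)
  delta_cv (fun k => h1 k (u k)) w1 ->
  delta_cv (fun k => h2 k (sub (u k) (g1 k w1))) w2 ->
  w2 <> zero ->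
  op_weak_cv (fun k x => h1 k (g2 k x)) (fun _ => zero).
Proof.
  intros Hban Huc Hus [[Hgrp [Hid [Hcomp Hinv]]] [Hstar _]] HD [M HM] Hg1 Hg2 Hi1 Hi2 Hv Hs Hw2.
  apply NNPP; intro Hnot.
  assert (HDa : forall k, D0 (fun x => h1 k (g2 k x))).
  { intro k. apply Hcomp; [| apply HD, Hg2]. apply (Hinv (g1 k)); [apply HD, Hg1 | apply Hi1]. }
  assert (HIa : forall k, inverse_of (fun x => h2 k (g1 k x)) (fun x => h1 k (g2 k x))).
  { intros k x; split.
    - rewrite (proj2 (Hi1 k _)), (proj1 (Hi2 k _)); reflexivity.
    - rewrite (proj2 (Hi2 k _)), (proj1 (Hi1 k _)); reflexivity. }
  destruct (Hstar _ _ HDa HIa Hnot) as [phi [Hphi [[G HG] _]]].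
  assert (HL1 : forall k, linear_op X (g1 k) /\ isometry X (g1 k))
    by (intro k; destruct (Hgrp _ (HD _ (Hg1 k))) as [? [? _]]; auto).
  assert (HL2 : forall k, linear_op X (g2 k) /\ isometry X (g2 k))
    by (intro k; destruct (Hgrp _ (HD _ (Hg2 k))) as [? [? _]]; auto).
  set (d := norm w2).
  assert (Hd : 0 < d).
  { assert (0 <= d) by apply L_norm_nonneg.
    destruct (Rle_lt_or_eq_dec _ _ H); auto. exfalso; apply Hw2, norm_eq0; auto. }
  set (m := scal (/2) w2).
  assert (HM0 : 0 <= M) by (apply Rle_trans with (norm (u O)); [apply L_norm_nonneg | apply HM]).
  assert (Hw1 := L_norm_nonneg _ w1).
  set (R0 := M + norm w1 + d/2 + 1).
  assert (HR0 : 0 < R0) by (unfold R0; lra).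
  destruct (Huc (d / R0)) as [delta [Hdel Huc']].
  { apply Rdiv_lt_0_compat; lra. }
  set (eps := Rmin 1 (d * delta / 4)).
  assert (He1 : eps <= 1) by apply Rmin_l.
  assert (He2 : eps <= d * delta / 4) by apply Rmin_r.
  assert (He0 : 0 < eps).
  { unfold eps; apply Rmin_glb_lt; [lra|]. assert (0 < d * delta) by (apply Rmult_lt_0_compat; lra). lra. }
  destruct (Hv (add w1 (G m)) (eps/2)) as [N1 HN1]; [lra|].
  destruct (HG m (eps/2)) as [N2 HN2]; [lra|].
  destruct (Hs m eps He0) as [N3 HN3].
  set (j := max N1 (max N2 N3)).
  assert (Hj := phi_ge phi Hphi j).
  set (k := phi j).
  specialize (HN1 k ltac:(unfold k, j in *; lia)).
  specialize (HN2 j ltac:(unfold j; lia)).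
  specialize (HN3 k ltac:(unfold k, j in *; lia)).
  simpl in HN1, HN2, HN3. fold k in HN2.
  destruct (HL1 k) as [Hl1 Hs1]. destruct (HL2 k) as [Hl2 Hs2].
  set (z := sub (h1 k (u k)) w1) in *.
  set (s := h2 k (sub (u k) (g1 k w1))) in *.
  assert (Hsz : sub (u k) (g1 k w1) = g1 k z).
  { unfold z; rewrite L_lin_sub, (proj2 (Hi1 k _)); auto. }
  assert (Key : forall y, norm (sub s y) = norm (sub z (h1 k (g2 k y)))).
  { intro y. unfold s; rewrite Hsz.
    rewrite <- (Hs1 (sub z _)), <- (Hs2 (sub (h2 k _) y)), !L_lin_sub by auto.
    rewrite (proj2 (Hi1 k _)), (proj2 (Hi2 k _)); reflexivity. }
  assert (Hh1z : h1 k zero = zero).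
  { rewrite <- (L_lin0 _ _ Hl1) at 1. apply (proj1 (Hi1 k _)). }
  assert (HSz : norm s = norm z).
  { assert (H := Key zero). rewrite (L_lin0 _ _ Hl2), Hh1z, !L_sub_zero in H. exact H. }
  rewrite <- L_id1 in HN1. fold z in HN1.
  assert (HT := Key m).
  assert (Htri := norm_triangle _ (sub z (h1 k (g2 k m))) (sub (h1 k (g2 k m)) (G m))).
  rewrite L_id7 in Htri.
  assert (HS : norm z <= M + norm w1).
  { unfold z. eapply Rle_trans; [apply L_norm_sub_le|].
    rewrite <- (Hs1 (h1 k (u k))), (proj2 (Hi1 k _)). specialize (HM k). lra. }
  assert (Hm : norm m = d / 2).
  { unfold m; rewrite norm_scal, Rabs_right; [unfold d; field| lra]. }
  assert (HTle := L_norm_sub_le _ s m).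
  assert (Hdle : d <= norm s + norm (sub s w2)).
  { unfold d. rewrite <- (L_id4 _ s w2) at 1. apply L_norm_sub_le. }
  set (S := norm s) in *. set (T := norm (sub s m)) in *. set (W := norm (sub s w2)) in *.
  assert (HT0 : 0 <= T) by apply L_norm_nonneg.
  set (rho := T + eps).
  assert (Hrho : 0 < rho) by (unfold rho; lra).
  assert (HSr : S <= rho) by (unfold rho; lra).
  assert (HWr : W <= rho) by (unfold rho; lra).
  assert (HrR : rho <= R0) by (unfold rho, R0; lra).
  assert (Hir : 0 < / rho) by (apply Rinv_0_lt_compat; lra).
  assert (Hnr : forall x : X, norm (scal (/rho) x) = / rho * norm x).
  { intro x; rewrite norm_scal, Rabs_right; lra. }
  assert (Hle1 : forall t, t <= rho -> / rho * t <= 1).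
  { intros t Ht. rewrite <- (Rinv_l rho) by lra. apply Rmult_le_compat_l; lra. }
  specialize (Huc' (scal (/rho) s) (scal (/rho) (sub s w2))).
  rewrite !Hnr, <- L_scal_sub, Hnr, L_id4, <- scal_add_r, scal_assoc, (Rmult_comm (/2) (/rho)) in Huc'.
  rewrite <- scal_assoc, L_id5, Hnr in Huc'.
  fold m in Huc'. fold S W T d in Huc'.
  assert (Hfin : / rho * T <= 1 - delta).
  { apply Huc'; try (apply Hle1; lra).
    unfold Rdiv. rewrite Rmult_comm. apply Rmult_le_compat_r; [lra|].
    apply Rinv_le_contravar; lra. }
  assert (HT2 : T <= (1 - delta) * rho).
  { apply Rmult_le_compat_l with (r := rho) in Hfin; [|lra].
    rewrite <- Rmult_assoc, Rinv_r, Rmult_1_l in Hfin by lra. lra. }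
  assert (delta * rho <= eps) by (unfold rho in *; lra).
  assert (d * delta <= 2 * (delta * rho)) by nra.
  lra.
Qed.
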